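(* Consider the mixed support-set model described in the context, and let $\mathsf p,\mathsf q_1,\dots,\mathsf q_h,\mathsf r_1,\dots,\mathsf r_m$ be $1+h+m$ distinct sensors. Then (whenever the conditioning event has positive probability) $\Pr\Big(i\in\mathcal T_{\mathsf p}\ \Big|\ i\in\hat{\mathcal T}_{\mathsf p}^{\complement},\ i\in\bigcap_{l=1}^{h}\hat{\mathcal T}_{\mathsf q_l},\ i\in\bigcap_{l=1}^{m}\hat{\mathcal T}_{\mathsf r_l}^{\complement}\Big)$ equals, writing $\phi=\frac{T}{N-T}\epsilon$, $$\frac{(1-\epsilon)^{h}\epsilon^{m+1}\frac{J}{N}+\epsilon\,\phi^{h}(1-\phi)^{m}\frac{I}{N}}{(1-\epsilon)^{h}\epsilon^{m+1}\frac{J}{N}+h(1-\epsilon)\phi^{h-1}(1-\phi)^{m+1}\frac{I}{N}+(m+1)\,\epsilon\,\phi^{h}(1-\phi)^{m}\frac{I}{N}+\phi^{h}(1-\phi)^{m+1}\frac{N-J-(m+h+1)I}{N}}.$$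
   Context: Let $N>T\ge1$ be integers and $\Omega=\{1,\dots,N\}$; complements are taken in $\Omega$. A finite set $\mathcal L$ of sensors is given. Mixed support-set model: there are a fixed set $\mathcal J\subseteq\Omega$ with $|\mathcal J|=J$ and, for each sensor $\mathsf p\in\mathcal L$, a fixed set $\mathcal I_{\mathsf p}\subseteq\Omega$ with $|\mathcal I_{\mathsf p}|=I$, such that $\mathcal I_{\mathsf p}\cap\mathcal J=\emptyset$ for all $\mathsf p$, $\mathcal I_{\mathsf p}\cap\mathcal I_{\mathsf q}=\emptyset$ for $\mathsf p\ne\mathsf q$, and the true support set of sensor $\mathsf p$ is $\mathcal T_{\mathsf p}=\mathcal I_{\mathsf p}\cup\mathcal J$; thus $T=I+J$. Each sensor has a random estimated support set $\hat{\mathcal T}_{\mathsf p}\subseteq\Omega$. A random index $i$ is uniformly distributed on $\Omega$ and independent of all estimates. System model: there is $\epsilon$ with $0\le\epsilon\le (N-T)/N$, common to all sensors, such that for every sensor $\mathsf p$ and every $j\in\Omega$, $\Pr(j\in\hat{\mathcal T}_{\mathsf p})=1-\epsilon$ if $j\in\mathcal T_{\mathsf p}$ and $\Pr(j\in\hat{\mathcal T}_{\mathsf p})=\frac{T}{N-T}\epsilon$ if $j\notin\mathcal T_{\mathsf p}$ (so $\Pr(i\in\hat{\mathcal T}_{\mathsf p})=T/N$, detection probability $1-\epsilon$, miss probability $\epsilon$, false-alarm probability $\frac{T}{N-T}\epsilon$). For each fixed $j\in\Omega$, the events $\{j\in\hat{\mathcal T}_{\mathsf p}\}$, $\mathsf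 p\in\mathcal L$, are mutually independent. Convention: $0^0=1$ and a term with coefficient $0$ is $0$. *)

(* Defs.v *)
From mathcomp Require Import all_boot all_order all_algebra.
Set Implicit Arguments. Unset Strict Implicit. Unset Printing Implicit Defensive.
Import Order.TTheory GRing.Theory Num.Theory.
Local Open Scope ring_scope.

Definition Pr (R : numDomainType) (Omega : finType) (P : Omega -> R)
  (E : pred Omega) : R := \sum_(w | E w) P w.

Definition condPr (R : numFieldType) (Omega : finType) (P : Omega -> R)
  (A B : pred Omega) : R := Pr P (predI A B) / Pr P B.

Definition is_pmf (R : numDomainType) (Omega : finType) (P : Omega -> R) : Prop :=
  (forall w, 0 <= P w) /\ \sum_w P w = 1.

(* Main.v *)
Require Import Defs.
From mathcomp Require Import all_boot all_order all_algebra.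
From mathcomp Require Import ring lra.
Import Order.TTheory GRing.Theory Num.Theory.
Local Open Scope ring_scope.
Set Implicit Arguments. Unset Strict Implicit.

Lemma Pr_ext (R : numDomainType) (Om : finType) (P : Om -> R) (A B : pred Om) :
  A =1 B -> Pr P A = Pr P B.
Proof. by move=> H; rewrite /Pr; apply: eq_bigl. Qed.

Lemma Pr_split (R : numDomainType) (Om : finType) (P : Om -> R) (A B : pred Om) :
  Pr P A = Pr P [pred w | A w && B w] + Pr P [pred w | A w && ~~ B w].
Proof. by rewrite /Pr (bigID B). Qed.

Lemma Pr_part (R : numDomainType) (Om Y : finType) (P : Om -> R) (pi : Om -> Y) (E : pred Y) :
  Pr P [pred w | E (pi w)] = \sum_(y | E y) Pr P [pred w | pi w == y].
Proof.
rewrite /Pr (partition_big pi E) //=; apply: eq_bigr => y Ey; apply: eq_bigl => w /=.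
by case: eqP => [->|]; rewrite ?Ey ?andbF.
Qed.

Lemma forall_setU1 (T : finType) (F : pred T) c (A : {set T}) :
  [forall s in c |: A, F s] = F c && [forall s in A, F s].
Proof.
apply/forall_inP/andP => [H|[Hc /forall_inP HA]].
  split; first by apply: H; rewrite setU11.
  by apply/forall_inP => s sA; apply: H; rewrite setU1r.
by move=> s; rewrite in_setU1 => /orP[/eqP->|/HA].
Qed.

Lemma forall_set0 (T : finType) (F : pred T) : [forall s in set0, F s] = true.
Proof. by apply/forall_inP => s; rewrite in_set0. Qed.

Lemma indep_compl (R : numDomainType) (Om L : finType) (P : Om -> R) (Ev : L -> pred Om) :
  (forall S : {set L}, Pr P [pred w | [forall s in S, Ev s w]] = \prod_(s in S) Pr P (Ev s)) ->
  forall (C A : {set L}), {in A, forall s, s \notin C} ->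
  Pr P [pred w | [forall s in A, Ev s w] && [forall s in C, ~~ Ev s w]] =
    \prod_(s in A) Pr P (Ev s) * \prod_(s in C) (1 - Pr P (Ev s)).
Proof.
move=> Hind C; move Hn: #|C| => n; elim: n C Hn => [|n IH] C Hn A HAC.
  have -> : C = set0 by apply/eqP; rewrite -cards_eq0 Hn.
  rewrite big_set0 mulr1 -Hind; apply: Pr_ext => w /=; by rewrite forall_set0 andbT.
have [c cC] : exists c, c \in C.
  by apply/set0Pn; rewrite -card_gt0 Hn.
have CE : C = c |: (C :\ c) by rewrite setD1K.
have cA : c \notin A by apply/negP => /HAC; rewrite cC.
have Hn' : #|C :\ c| = n by move: Hn; rewrite (cardsD1 c) cC add1n => -[].
rewrite {2}CE big_setU1 ?setD11 //=.
rewrite {1}CE.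
have HX := Pr_split P [pred w | [forall s in A, Ev s w] && [forall s in C :\ c, ~~ Ev s w]] (Ev c).
rewrite IH // in HX; last by move=> s sA; rewrite in_setD1 negb_and HAC ?orbT.
have HY := IH _ Hn' (c |: A).
rewrite big_setU1 //= in HY.
have E1 : [pred w | [forall s in A, Ev s w] && [forall s in c |: (C :\ c), ~~ Ev s w]] =1
  [pred w | ([pred w | [forall s in A, Ev s w] && [forall s in C :\ c, ~~ Ev s w]] w) && ~~ Ev c w].
  by move=> w /=; rewrite forall_setU1; case: (Ev c w); rewrite ?andbF ?andbT.
have E2 : [pred w | [forall s in c |: A, Ev s w] && [forall s in C :\ c, ~~ Ev s w]] =1
  [pred w | ([pred w | [forall s in A, Ev s w] && [forall s in C :\ c, ~~ Ev s w]] w) && Ev c w].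
  by move=> w /=; rewrite forall_setU1; case: (Ev c w); rewrite ?andbF ?andbT.
rewrite (Pr_ext P E1); rewrite (Pr_ext P E2) in HY.
have -> : Pr P [pred w | ([pred w | [forall s in A, Ev s w] && [forall s in C :\ c, ~~ Ev s w]] w) && ~~ Ev c w]
  = \prod_(s in A) Pr P (Ev s) * \prod_(s in C :\ c) (1 - Pr P (Ev s)) -
    Pr P [pred w | ([pred w | [forall s in A, Ev s w] && [forall s in C :\ c, ~~ Ev s w]] w) && Ev c w].
  by rewrite HX addrC addKr.
rewrite HY; last first.
  move=> s; rewrite in_setU1 => /orP[/eqP->|sA]; first by rewrite setD11.
  by rewrite in_setD1 negb_and HAC ?orbT.
ring.
Qed.
Lemma forall_imset (U T : finType) (F : pred T) (f : U -> T) :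
  [forall s in [set f x | x in setT], F s] = [forall x, F (f x)].
Proof.
apply/forall_inP/forallP => H.
  by move=> x; apply: H; apply: imset_f; rewrite in_setT.
by move=> s /imsetP [x _ ->].
Qed.

Lemma prod_imset (R : comPzRingType) (U T : finType) (F : T -> R) (f : U -> T) :
  injective f -> \prod_(s in [set f x | x in setT]) F s = \prod_x F (f x).
Proof.
move=> Hf; rewrite big_imset; last by move=> x y _ _; apply: Hf.
by apply: eq_bigl => x; rewrite in_setT.
Qed.

Lemma prod_if1 (R : comPzRingType) n (l0 : 'I_n) (x y : R) :
  \prod_(l < n) (if l == l0 then x else y) = x * y ^+ n.-1.
Proof.
rewrite (bigD1 l0) //= eqxx; congr (_ * _).
rewrite (eq_bigr (fun _ => y)); last by move=> l /negbTE ->.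
by rewrite prodr_const cardC1 card_ord.
Qed.

Lemma sum_if1 (R : nmodType) n (l0 : 'I_n) (x : R) :
  \sum_(l < n) (if l == l0 then x else 0) = x.
Proof.
rewrite (bigD1 l0) //= eqxx big1 ?addr0 //; by move=> l /negbTE ->.
Qed.

Lemma sum_ind (R : pzSemiRingType) (T : finType) (A : {set T}) (c : R) :
  \sum_k (if k \in A then c else 0) = #|A|%:R * c.
Proof. by rewrite -big_mkcond sumr_const mulr_natl. Qed.

Lemma prod_cst (R : comPzRingType) n (x : R) : \prod_(l < n) x = x ^+ n.
Proof. by rewrite prodr_const card_ord. Qed.

Theorem proposition5 (R : realFieldType) (N I J : nat)
  (L Omega : finType) (P : Omega -> R)
  (idx : Omega -> 'I_N) (est : Omega -> {ffun L -> {set 'I_N}})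
  (Jset : {set 'I_N}) (Iset : L -> {set 'I_N}) (eps : R)
  (p : L) (h m : nat) (q : 'I_h -> L) (r : 'I_m -> L) :
  is_pmf P ->
  (* parameters *)
  (I + J < N)%N -> (1 <= I + J)%N ->
  (* mixed support-set model *)
  #|Jset| = J ->
  (forall s, #|Iset s| = I) ->
  (forall s, [disjoint Iset s & Jset]) ->
  (forall s s', s != s' -> [disjoint Iset s & Iset s']) ->
  (* system model *)
  0 <= eps -> eps <= (N%:R - (I + J)%:R) / N%:R ->
  (forall (s : L) (j : 'I_N),
     Pr P [pred w | j \in est w s] =
       if j \in Iset s :|: Jset then 1 - eps
       else (I + J)%:R / (N%:R - (I + J)%:R) * eps) ->
  (* for each fixed j, the events {j in est s}, s in L, are mutually independent *)
  (forall (j : 'I_N) (S : {set L}),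
     Pr P [pred w | [forall s in S, j \in est w s]] =
       \prod_(s in S) Pr P [pred w | j \in est w s]) ->
  (* i uniform on Omega and independent of all the estimates *)
  (forall k : 'I_N, Pr P [pred w | idx w == k] = N%:R^-1) ->
  (forall (k : 'I_N) (f : {ffun L -> {set 'I_N}}),
     Pr P [pred w | (idx w == k) && (est w == f)] =
       Pr P [pred w | idx w == k] * Pr P [pred w | est w == f]) ->
  (* distinct sensors p, q_1..q_h, r_1..r_m *)
  injective q -> injective r ->
  (forall l, q l != p) -> (forall l, r l != p) ->
  (forall l l', q l != r l') ->
  let B := [pred w | [&& idx w \notin est w p,
                         [forall l, idx w \in est w (q l)] &
                         [forall l, idx w \notin est w (r l)]]] in
  0 < Pr P B ->
  let phi := (I + J)%:R / (N%:R - (I + J)%:R) * eps in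
  condPr P [pred w | idx w \in Iset p :|: Jset] B =
    ((1 - eps) ^+ h * eps ^+ m.+1 * (J%:R / N%:R)
       + eps * phi ^+ h * (1 - phi) ^+ m * (I%:R / N%:R))
    / ((1 - eps) ^+ h * eps ^+ m.+1 * (J%:R / N%:R)
       + h%:R * (1 - eps) * phi ^+ h.-1 * (1 - phi) ^+ m.+1 * (I%:R / N%:R)
       + (m.+1)%:R * eps * phi ^+ h * (1 - phi) ^+ m * (I%:R / N%:R)
       + phi ^+ h * (1 - phi) ^+ m.+1
           * ((N%:R - J%:R - (m + h).+1%:R * I%:R) / N%:R)).

Proof.
move=> [P0 P1] HNT HT1 HJ HI HIJ HII Heps0 Heps1 Hmarg Hind Hunif Hie Hq Hr Hqp Hrp Hqr B HB phi.
set a := fun (s : L) (k : 'I_N) => if k \in Iset s :|: Jset then 1 - eps else phi.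
have Ha : forall s k, Pr P [pred w | k \in est w s] = a s k by move=> s k; rewrite Hmarg.
set g := fun k : 'I_N => (1 - a p k) * \prod_(l < h) a (q l) k * \prod_(l < m) (1 - a (r l) k).
set Bk := fun (k : 'I_N) (f : {ffun L -> {set 'I_N}}) =>
  [&& k \notin f p, [forall l, k \in f (q l)] & [forall l, k \notin f (r l)]].
have HBk : forall k, Pr P [pred w | Bk k (est w)] = g k.
  move=> k.
  have pr : p \notin [set r x | x in setT].
    by apply/imsetP => -[x _ E]; move: (Hrp x); rewrite -E eqxx.
  have HAC : {in [set q x | x in setT], forall s, s \notin p |: [set r x | x in setT]}.
    move=> s /imsetP [x _ ->]; rewrite in_setU1 negb_or Hqp /=.
    by apply/imsetP => -[y _ E]; move: (Hqr x y); rewrite E eqxx.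
  have := indep_compl (Ev := fun s => [pred w | k \in est w s]) (P := P) _ HAC.
  rewrite (Pr_ext P (B := [pred w | Bk k (est w)])); last first.
    by move=> w /=; rewrite forall_setU1 !forall_imset /Bk andbCA.
  move=> ->; last by move=> S; exact: Hind.
  rewrite big_setU1 //= !prod_imset // /g.
  rewrite Ha; under eq_bigr do rewrite Ha.
  under [in X in _ * X]eq_bigr do rewrite Ha.
  ring.
have Hgen : forall X : pred 'I_N, Pr P [pred w | X (idx w) && Bk (idx w) (est w)] =
    N%:R^-1 * \sum_k (if X k then g k else 0).
  move=> X.
  have E1 : forall k, N%:R^-1 * (if X k then g k else 0) =
     \sum_f (if X k && Bk k f then Pr P [pred w | (idx w, est w) == (k, f)] else 0).
    move=> k; case: (X k) => /=; last by rewrite mulr0 big1.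
    rewrite -HBk.
    rewrite (Pr_part P est (Bk k)) big_mkcond mulr_sumr.
    apply: eq_bigr => f _; case: (Bk k f); last by rewrite mulr0.
    symmetry; rewrite (Pr_ext P (B := [pred w | (idx w == k) && (est w == f)])); last by move=> w /=.
    by rewrite Hie Hunif.
  rewrite mulr_sumr (eq_bigr _ (fun k _ => E1 k)) pair_big /=.
  transitivity (Pr P [pred w | (fun y => X y.1 && Bk y.1 y.2) ((fun w => (idx w, est w)) w)]); first by apply: Pr_ext.
  rewrite (Pr_part P (fun w => (idx w, est w)) (fun y => X y.1 && Bk y.1 y.2)) big_mkcond; apply: eq_bigr => -[k f] _ //=.
pose cJ := (1 - eps) ^+ h * eps ^+ m.+1.
pose cp := eps * phi ^+ h * (1 - phi) ^+ m.
pose cq := (1 - eps) * phi ^+ h.-1 * (1 - phi) ^+ m.+1.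
pose c0 := phi ^+ h * (1 - phi) ^+ m.+1.
have Hown : forall s0 s k, k \in Iset s0 -> (k \in Iset s) = (s == s0).
  move=> s0 s k H; case: (eqVneq s s0) => [->//|ne].
  by apply: (disjointFr (HII s0 s _) H); rewrite eq_sym.
have HaJ : forall s k, k \in Jset -> a s k = 1 - eps.
  by move=> s k kJ; rewrite /a in_setU kJ orbT.
have HanJ : forall s k, k \notin Jset -> a s k = if k \in Iset s then 1 - eps else phi.
  by move=> s k kJ; rewrite /a in_setU (negbTE kJ) orbF.
have Hpt : forall k, g k = c0 + (if k \in Jset then cJ - c0 else 0)
   + (if k \in Iset p then cp - c0 else 0)
   + \sum_(l < h) (if k \in Iset (q l) then cq - c0 else 0)
   + \sum_(l < m) (if k \in Iset (r l) then cp - c0 else 0).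
  move=> k; rewrite /g.
  case: (boolP (k \in Jset)) => kJ.
    have nI : forall s, (k \in Iset s) = false by move=> s; exact: (disjointFl (HIJ s) kJ).
    have -> : \prod_(l < h) a (q l) k = (1 - eps) ^+ h.
      by rewrite -prod_cst; apply: eq_bigr => l _; rewrite HaJ.
    have -> : \prod_(l < m) (1 - a (r l) k) = (1 - (1 - eps)) ^+ m.
      by rewrite -prod_cst; apply: eq_bigr => l _; rewrite HaJ.
    have -> : \sum_(l < h) (if k \in Iset (q l) then cq - c0 else 0) = 0.
      by apply: big1 => l _; rewrite nI.
    have -> : \sum_(l < m) (if k \in Iset (r l) then cp - c0 else 0) = 0.
      by apply: big1 => l _; rewrite nI.
    have e1 : 1 - (1 - eps) = eps by ring.
    rewrite HaJ // e1 nI /cJ /c0 [eps ^+ m.+1]exprS; ring.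
  case: (boolP (k \in Iset p)) => kp.
    have -> : \prod_(l < h) a (q l) k = phi ^+ h.
      by rewrite -prod_cst; apply: eq_bigr => l _; rewrite HanJ // (Hown _ _ _ kp) (negbTE (Hqp l)).
    have -> : \prod_(l < m) (1 - a (r l) k) = (1 - phi) ^+ m.
      by rewrite -prod_cst; apply: eq_bigr => l _; rewrite HanJ // (Hown _ _ _ kp) (negbTE (Hrp l)).
    have -> : \sum_(l < h) (if k \in Iset (q l) then cq - c0 else 0) = 0.
      by apply: big1 => l _; rewrite (Hown _ _ _ kp) (negbTE (Hqp l)).
    have -> : \sum_(l < m) (if k \in Iset (r l) then cp - c0 else 0) = 0.
      by apply: big1 => l _; rewrite (Hown _ _ _ kp) (negbTE (Hrp l)).
    rewrite HanJ // kp /cp /c0; ring.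
  have Hap : a p k = phi by rewrite HanJ // (negbTE kp).
  case: (boolP [exists l, k \in Iset (q l)]) => [/existsP [l0 kq]|/existsPn nq].
    have -> : \prod_(l < h) a (q l) k = (1 - eps) * phi ^+ h.-1.
      rewrite -(prod_if1 l0 (1 - eps) phi); apply: eq_bigr => l _.
      by rewrite HanJ // (Hown _ _ _ kq) (inj_eq Hq).
    have -> : \prod_(l < m) (1 - a (r l) k) = (1 - phi) ^+ m.
      rewrite -prod_cst; apply: eq_bigr => l _.
      by rewrite HanJ // (Hown _ _ _ kq) eq_sym (negbTE (Hqr l0 l)).
    have -> : \sum_(l < h) (if k \in Iset (q l) then cq - c0 else 0) = cq - c0.
      rewrite -[RHS](sum_if1 l0); apply: eq_bigr => l _.
      by rewrite (Hown _ _ _ kq) (inj_eq Hq).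
    have -> : \sum_(l < m) (if k \in Iset (r l) then cp - c0 else 0) = 0.
      by apply: big1 => l _; rewrite (Hown _ _ _ kq) eq_sym (negbTE (Hqr l0 l)).
    rewrite Hap /cq /c0 ![(1 - phi) ^+ m.+1]exprS; ring.
  have -> : \prod_(l < h) a (q l) k = phi ^+ h.
    by rewrite -prod_cst; apply: eq_bigr => l _; rewrite HanJ // (negbTE (nq l)).
  have -> : \sum_(l < h) (if k \in Iset (q l) then cq - c0 else 0) = 0.
    by apply: big1 => l _; rewrite (negbTE (nq l)).
  case: (boolP [exists l, k \in Iset (r l)]) => [/existsP [l0 kr]|/existsPn nr].
    have -> : \prod_(l < m) (1 - a (r l) k) = (1 - (1 - eps)) * (1 - phi) ^+ m.-1.
      rewrite -(prod_if1 l0 (1 - (1 - eps)) (1 - phi)); apply: eq_bigr => l _.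
      by rewrite HanJ // (Hown _ _ _ kr) (inj_eq Hr); case: (l == l0).
    have -> : \sum_(l < m) (if k \in Iset (r l) then cp - c0 else 0) = cp - c0.
      rewrite -[RHS](sum_if1 l0); apply: eq_bigr => l _.
      by rewrite (Hown _ _ _ kr) (inj_eq Hr).
    have Em : (1 - phi) ^+ m = (1 - phi) * (1 - phi) ^+ m.-1.
      by rewrite -exprS prednK // (leq_ltn_trans (leq0n l0) (ltn_ord l0)).
    rewrite Hap /cp /c0 Em [(1 - phi) ^+ m.+1]exprS; ring.
  have -> : \prod_(l < m) (1 - a (r l) k) = (1 - phi) ^+ m.
    by rewrite -prod_cst; apply: eq_bigr => l _; rewrite HanJ // (negbTE (nr l)).
  have -> : \sum_(l < m) (if k \in Iset (r l) then cp - c0 else 0) = 0.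
    by apply: big1 => l _; rewrite (negbTE (nr l)).
  rewrite Hap /c0 [(1 - phi) ^+ m.+1]exprS; ring.
have Hpt1 : forall k, (if k \in Iset p :|: Jset then g k else 0) =
   (if k \in Jset then cJ else 0) + (if k \in Iset p then cp else 0).
  move=> k; rewrite Hpt in_setU.
  case: (boolP (k \in Jset)) => kJ.
    have nI : forall s, (k \in Iset s) = false by move=> s; exact: (disjointFl (HIJ s) kJ).
    rewrite (@big1 _ _ _ _ _ _ (fun l : 'I_h => _)) => [|l _]; last by rewrite nI.
    rewrite (@big1 _ _ _ _ _ _ (fun l : 'I_m => _)) => [|l _]; last by rewrite nI.
    rewrite !nI; ring.
  case: (boolP (k \in Iset p)) => kp /=; last by rewrite add0r.
  rewrite (@big1 _ _ _ _ _ _ (fun l : 'I_h => _)) => [|l _]; last by rewrite (Hown _ _ _ kp) (negbTE (Hqp l)).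
  rewrite (@big1 _ _ _ _ _ _ (fun l : 'I_m => _)) => [|l _]; last by rewrite (Hown _ _ _ kp) (negbTE (Hrp l)).
  ring.
have HnumE : Pr P (predI [pred w | idx w \in Iset p :|: Jset] B) =
    N%:R^-1 * \sum_k (if k \in Iset p :|: Jset then g k else 0).
  by rewrite -(Hgen (fun k => k \in Iset p :|: Jset)); apply: Pr_ext.
have HdenE : Pr P B = N%:R^-1 * \sum_k (if predT k then g k else 0).
  by rewrite -(Hgen predT); apply: Pr_ext.
have ES1 : \sum_k (if k \in Iset p :|: Jset then g k else 0) = J%:R * cJ + I%:R * cp.
  by rewrite (eq_bigr _ (fun k _ => Hpt1 k)) big_split /= !sum_ind HJ HI.
have ES2 : \sum_k (if predT k then g k else 0) = N%:R * c0 + J%:R * (cJ - c0) + I%:R * (cp - c0)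
    + h%:R * (I%:R * (cq - c0)) + m%:R * (I%:R * (cp - c0)).
  have Eq : \sum_(k < N) \sum_(l < h) (if k \in Iset (q l) then cq - c0 else 0) = h%:R * (I%:R * (cq - c0)).
    rewrite exchange_big /=; under eq_bigr do rewrite sum_ind HI.
    rewrite sumr_const (_ : #|_| = h); last exact: card_ord.
    by rewrite [RHS]mulr_natl.
  have Er : \sum_(k < N) \sum_(l < m) (if k \in Iset (r l) then cp - c0 else 0) = m%:R * (I%:R * (cp - c0)).
    rewrite exchange_big /=; under eq_bigr do rewrite sum_ind HI.
    rewrite sumr_const (_ : #|_| = m); last exact: card_ord.
    by rewrite [RHS]mulr_natl.
  rewrite (eq_bigr _ (fun k _ => Hpt k)) !big_split /= !sum_ind HJ HI Eq Er.
  rewrite sumr_const (_ : #|_| = N); last exact: card_ord.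
  rewrite -mulr_natl.
  ring.
rewrite /condPr HnumE HdenE ES1 ES2 /cJ /cp /cq /c0; congr (_ / _); ring.
Qed.
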